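(* Let $d,k$ be positive integers, $N=d^k$, and let $A\in\mathbb{Z}_{\geq0}^{N\times d}$ be an $(N,d)$-complete consecutive integers matrix. Then $A$ is completely mixable and $$\gamma(A)=\beta(A)=d+\sum_{i=0}^{d-1}\sum_{j=1}^{k} i\cdot d^{j-1}=:a_d(k).$$
   Context: For $A\in\mathbb{R}^{m\times d}$ and $\Pi=(\pi_1,\dots,\pi_d)\in\mathfrak{S}(m)^d$ (where $\mathfrak{S}(m)$ is the symmetric group on $\{1,\dots,m\}$), $A^\Pi$ denotes the matrix with $A^\Pi_{i,j}=A_{\pi_j^{-1}(i),j}$. Define $\gamma(A)=\min_{\Pi}\max_{i}\sum_{j=1}^d A^\Pi_{i,j}$ and $\beta(A)=\max_{\Pi}\min_{i}\sum_{j=1}^d A^\Pi_{i,j}$; $A$ is completely mixable if $\gamma(A)=\beta(A)$. For $d,N\in\mathbb{Z}_{\geq0}$ let $a=(1,\dots,N)^\top$; any matrix $A^\Pi$ obtained from $(a,\dots,a)\in\mathbb{Z}^{N\times d}$ by permutations $\Pi\in\mathfrak{S}(N)^d$ of the columns' entries is called an $(N,d)$-complete consecutive integers matrix. *)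

(* Defs.v *)
From mathcomp Require Import all_boot all_algebra all_fingroup.
Set Implicit Arguments. Unset Strict Implicit. Unset Printing Implicit Defensive.

Definition colperm_mx (m d : nat) (A : 'M[nat]_(m, d))
  (P : {ffun 'I_d -> {perm 'I_m}}) : 'M[nat]_(m, d) :=
  \matrix_(i < m, j < d) A ((P j)^-1%g i) j.

Definition rowsum (m d : nat) (A : 'M[nat]_(m, d)) (i : 'I_m) : nat :=
  \sum_(j < d) A i j.

Definition rowmax (m d : nat) (A : 'M[nat]_(m, d)) : nat :=
  \max_(i < m) rowsum A i.

(* min over rows; the seed rowmax A is >= every row sum, so for m > 0
   this is exactly the minimum row sum. *)
Definition rowmin (m d : nat) (A : 'M[nat]_(m, d)) : nat :=
  \big[minn/rowmax A]_(i < m) rowsum A i.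

Definition idperms (m d : nat) : {ffun 'I_d -> {perm 'I_m}} := [ffun=> 1%g].

(* gamma(A) = min_Pi max_i sum_j A^Pi_{i,j}; seed is the value at the
   identity Pi, itself a candidate, so this is exactly the minimum. *)
Definition gamma (m d : nat) (A : 'M[nat]_(m, d)) : nat :=
  \big[minn/rowmax (colperm_mx A (idperms m d))]_(P : {ffun 'I_d -> {perm 'I_m}})
     rowmax (colperm_mx A P).

Definition beta (m d : nat) (A : 'M[nat]_(m, d)) : nat :=
  \max_(P : {ffun 'I_d -> {perm 'I_m}}) rowmin (colperm_mx A P).

Definition completely_mixable (m d : nat) (A : 'M[nat]_(m, d)) : Prop :=
  gamma A = beta A.

Definition consec_mx (N d : nat) : 'M[nat]_(N, d) := \matrix_(i < N, j < d) i.+1.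

Definition complete_consecutive (N d : nat) (A : 'M[nat]_(N, d)) : Prop :=
  exists P : {ffun 'I_d -> {perm 'I_N}}, A = colperm_mx (consec_mx N d) P.

Definition a_d (d k : nat) : nat :=
  d + \sum_(i < d) \sum_(1 <= j < k.+1) i * d ^ (j - 1).

(* Main.v *)
Require Import Defs.
From mathcomp Require Import all_boot all_algebra all_fingroup.
From mathcomp Require Import zify.

Fixpoint fd (d j k r : nat) : nat :=
  if k is k'.+1 then (r %% d + j) %% d + d * fd d j k' (r %/ d) else 0.

Lemma fd_lt d j k r : 0 < d -> fd d j k r < d ^ k.
Proof.
move=> hd; elim: k r => [|k IH] r /=; first by rewrite expn0.
have h1 := ltn_pmod (r %% d + j) hd.
have h2 := IH (r %/ d).
rewrite expnS.
have : d * (fd d j k (r %/ d)).+1 <= d * d ^ k by rewrite leq_mul2l h2 orbT.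
lia.
Qed.

Lemma fd_inj d j k r r' : 0 < d -> r < d ^ k -> r' < d ^ k ->
  fd d j k r = fd d j k r' -> r = r'.
Proof.
move=> hd; elim: k r r' => [|k IH] r r' /=.
  by rewrite expn0 !ltnS !leqn0 => /eqP -> /eqP ->.
move=> hr hr' H.
have Hm : (r %% d + j) %% d = (r' %% d + j) %% d.
  move: (congr1 (modn^~ d) H).
  by rewrite ![_ + d * _]addnC ![d * _]mulnC !modnMDl !modn_mod.
have Hr : r %% d = r' %% d.
  have : (r %% d + j == r' %% d + j %[mod d]) by rewrite Hm.
  by rewrite eqn_modDr !modn_mod => /eqP.
have Hq : r %/ d = r' %/ d.
  apply: IH.
  - by rewrite ltn_divLR // -expnSr.
  - by rewrite ltn_divLR // -expnSr.
  - move: H; rewrite Hm => /eqP; rewrite eqn_add2l eqn_mul2l.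
    by case/orP => [/eqP hd0|/eqP //]; move: hd; rewrite hd0.
by rewrite (divn_eq r d) (divn_eq r' d) Hr Hq.
Qed.

Lemma rot_sum d c : c < d -> \sum_(j < d) (c + j) %% d = \sum_(j < d) j.
Proof.
move=> hc.
have hd : 0 < d by apply: leq_ltn_trans hc.
pose h (j : 'I_d) : 'I_d := Ordinal (ltn_pmod (c + j) hd).
have hi : injective h.
  move=> x y /(congr1 val) /= /eqP.
  rewrite eqn_modDl !modn_small // => /eqP; exact: val_inj.
by rewrite [RHS](reindex_inj hi).
Qed.

Definition Gs d k := \sum_(t < k) d ^ t.
Definition Ts d := \sum_(i < d) i.

Lemma GsS d k : Gs d k.+1 = 1 + d * Gs d k.
Proof.
rewrite /Gs big_ord_recl expn0 big_distrr /=; congr (_ + _).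
apply: eq_bigr => i _. rewrite /bump /= add1n expnS //.
Qed.

Lemma fd_sum d k r : 0 < d -> \sum_(j < d) fd d j k r = Ts d * Gs d k.
Proof.
move=> hd; elim: k r => [|k IH] r /=.
  by rewrite big1 // /Gs big_ord0 muln0.
rewrite big_split /= -big_distrr /= IH rot_sum ?ltn_pmod //.
rewrite GsS -/(Ts d).
lia.
Qed.

Lemma a_dE d k : a_d d k = d + Ts d * Gs d k.
Proof.
rewrite /a_d; congr (_ + _); rewrite /Ts big_distrl /=; apply: eq_bigr => i _.
rewrite big_add1 /= big_mkord /Gs big_distrr /=; apply: eq_bigr => t _.
by rewrite subn1.
Qed.

Lemma bigmin_le_seq (T : eqType) (x : nat) (F : T -> nat) (s : seq T) y :
  y \in s -> \big[minn/x]_(i <- s) F i <= F y.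
Proof.
elim: s => [//|a s IH]; rewrite in_cons big_cons => /orP [/eqP ->|hy].
  exact: geq_minl.
exact: leq_trans (geq_minr _ _) (IH hy).
Qed.

Lemma bigmin_le (T : finType) (x : nat) (F : T -> nat) y :
  \big[minn/x]_(i : T) F i <= F y.
Proof. by apply: bigmin_le_seq; rewrite mem_index_enum. Qed.

Section Main.
End Main.

Definition gf d k (hd : 0 < d) (j : nat) (i : 'I_(d ^ k)) : 'I_(d ^ k) :=
  Ordinal (@fd_lt d j k i hd).

Lemma gf_inj d k (hd : 0 < d) j : injective (@gf d k hd j).
Proof.
move=> x y /(congr1 val) /= H; apply: val_inj.
exact: (@fd_inj d j k x y hd (ltn_ord x) (ltn_ord y) H).
Qed.

Definition gp d k (hd : 0 < d) j : {perm 'I_(d ^ k)} := perm (@gf_inj d k hd j).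

Lemma total d k (P0 P : {ffun 'I_d -> {perm 'I_(d ^ k)}}) :
  \sum_(i < d ^ k) rowsum (colperm_mx (colperm_mx (consec_mx (d ^ k) d) P0) P) i
  = \sum_(j < d) \sum_(i < d ^ k) i.+1.
Proof.
rewrite /rowsum exchange_big /=; apply: eq_bigr => j _.
have hi : injective (fun i => (P0 j)^-1%g ((P j)^-1%g i)).
  by move=> x y /perm_inj /perm_inj.
rewrite [RHS](reindex_inj hi) /=; apply: eq_bigr => i _.
by rewrite !mxE.
Qed.

Theorem theorem3 (d k : nat) (hd : 0 < d) (hk : 0 < k)
  (A : 'M[nat]_(d ^ k, d)) :
  complete_consecutive A ->
  completely_mixable A /\ gamma A = a_d d k /\ beta A = a_d d k.
Proof.
case=> P0 ->.
set a := a_d d k.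
set C := consec_mx (d ^ k) d.
have hN : 0 < d ^ k by rewrite expn_gt0 hd.
pose Pg : {ffun 'I_d -> {perm 'I_(d ^ k)}} := [ffun j : 'I_d => ((@gp d k hd j) * P0 j)^-1]%g.
have rowg : forall i, rowsum (colperm_mx (colperm_mx C P0) Pg) i = a.
  move=> i; rewrite /rowsum.
  transitivity (\sum_(j < d) (fd d j k i + 1)).
    apply: eq_bigr => j _; rewrite !mxE ffunE invgK permM permK.
    by rewrite /gp permE /= addn1.
  rewrite big_split /= fd_sum // sum_nat_const card_ord muln1 /a a_dE; lia.
have maxg : rowmax (colperm_mx (colperm_mx C P0) Pg) = a.
  rewrite /rowmax; apply/eqP; rewrite eqn_leq; apply/andP; split.
    apply: (big_ind (fun y => y <= a)) => //.
      by move=> x y hx hy; rewrite geq_max hx hy.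
    by move=> i _; rewrite rowg.
  by rewrite -(rowg (Ordinal hN)); exact: (leq_bigmax (Ordinal hN)).
have ming : rowmin (colperm_mx (colperm_mx C P0) Pg) = a.
  rewrite /rowmin maxg.
  apply: (big_ind (fun y => y = a)) => //;
    first [by move=> x y -> ->; rewrite minnn | by move=> i _; rewrite rowg].
have tot : forall P, \sum_(i < d ^ k)
    rowsum (colperm_mx (colperm_mx C P0) P) i = d ^ k * a.
  move=> P; rewrite total -(@total d k P0 Pg).
  by under eq_bigr do rewrite rowg; rewrite sum_nat_const card_ord.
have maxge : forall P, a <= rowmax (colperm_mx (colperm_mx C P0) P).
  move=> P; rewrite -(leq_pmul2l hN) -(tot P).
  rewrite -[X in _ <= X * _](card_ord (d ^ k)) -sum_nat_const.
  apply: leq_sum => i _; exact: leq_bigmax.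
have minle : forall P, rowmin (colperm_mx (colperm_mx C P0) P) <= a.
  move=> P; rewrite -(leq_pmul2l hN) -(tot P).
  rewrite -[X in X * _ <= _](card_ord (d ^ k)) -sum_nat_const.
  apply: leq_sum => i _; exact: bigmin_le.
have hg : gamma (colperm_mx C P0) = a.
  apply/eqP; rewrite eqn_leq; apply/andP; split.
    by rewrite -maxg; exact: bigmin_le.
  rewrite /gamma; apply: (big_ind (fun y => a <= y)) => //.
  by move=> x y hx hy; rewrite leq_min hx hy.
have hb : beta (colperm_mx C P0) = a.
  apply/eqP; rewrite eqn_leq; apply/andP; split.
    rewrite /beta; apply: (big_ind (fun y => y <= a)) => //.
    by move=> x y hx hy; rewrite geq_max hx hy.
  by rewrite -{1}ming; exact: (leq_bigmax Pg).
by rewrite /completely_mixable hg hb.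
Qed.
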